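(* Let $P$ be a $(0,1)$-polytope with the integer decomposition property. If the toric ring $\mathbf{k}[P]$ is nearly Gorenstein, then $\mathbf{k}[P]$ is level.
   Context: $\mathbf{k}$ is an infinite field. A $(0,1)$-polytope has all vertices in $\{0,1\}^d$. $P$ has the integer decomposition property if for every $k\ge1$ every lattice point of $kP$ is a sum of $k$ lattice points of $P$. The toric ring is $\mathbf{k}[P]=\mathbf{k}[\mathbf{t}^xs: x\in P\cap\mathbb{Z}^d]$, standard graded by the exponent of $s$, with graded maximal ideal $\mathbf{m}$ and canonical module $\omega$. It is nearly Gorenstein if $\mathbf{m}\subseteq\mathrm{tr}(\omega)=\sum_{\phi\in\mathrm{Hom}(\omega,\mathbf{k}[P])}\phi(\omega)$, and level if all minimal homogeneous generators of $\omega$ have the same degree. *)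

(* Defs.v *)
From HB Require Import structures.
From mathcomp Require Import all_boot all_order all_algebra.
From mathcomp Require Import mpoly.
Set Implicit Arguments. Unset Strict Implicit. Unset Printing Implicit Defensive.
Import Order.TTheory GRing.Theory Num.Theory.
Local Open Scope ring_scope.

(* A (0,1)-polytope P in R^d is given by a family V : 'I_n -> ('I_d -> bool)
   of 0/1 vectors; P = conv(V).  The ambient ring of k[P] is the polynomial
   ring k[t_1,...,t_d,s] = {mpoly K[d.+1]}: the variable of index ord_max is s,
   the variable of index (lift ord_max j) is t_j.  A monomial m : 'X_{1..d.+1}
   stands for t^x s^k with k = m ord_max and x j = m (lift ord_max j). *)

Section Toric.
Variables (K : fieldType) (d n : nat) (V : 'I_n -> 'I_d -> bool).

(* x is a lattice point of kP = k * conv(V) (coefficients in Q; since the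
   vertices are rational this is the same as over R). *)
Definition latt_pt (k : nat) (x : 'I_d -> nat) : Prop :=
  exists lam : 'I_n -> rat,
    [/\ forall i, 0 <= lam i,
        \sum_i lam i = k%:R &
        forall j, (x j)%:R = \sum_i lam i * (V i j : nat)%:R].

Definition IDP : Prop :=
  forall (k : nat) (x : 'I_d -> nat), (1 <= k)%N -> latt_pt k x ->
    exists y : 'I_k -> 'I_d -> nat,
      (forall i, latt_pt 1 (y i)) /\ forall j, x j = (\sum_i y i j)%N.

Definition mdeg (m : 'X_{1..d.+1}) : nat := m ord_max.
Definition mexp (m : 'X_{1..d.+1}) (j : 'I_d) : nat := m (lift ord_max j).

(* monomials of k[P]: products of k generators t^y s, y in P ∩ Z^d *)
Definition in_semigroup (m : 'X_{1..d.+1}) : Prop :=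
  exists y : 'I_(mdeg m) -> 'I_d -> nat,
    (forall i, latt_pt 1 (y i)) /\ forall j, mexp m j = (\sum_i y i j)%N.

(* lattice points in the relative interior of the cone over P x {1}:
   strictly positive combinations of all the generators (V i, 1) *)
Definition in_relint (m : 'X_{1..d.+1}) : Prop :=
  exists lam : 'I_n -> rat,
    [/\ forall i, 0 < lam i,
        \sum_i lam i = (mdeg m)%:R &
        forall j, (mexp m j)%:R = \sum_i lam i * (V i j : nat)%:R].

Definition toric (p : {mpoly K[d.+1]}) : Prop :=
  forall m, m \in msupp p -> in_semigroup m.

Definition max_ideal (p : {mpoly K[d.+1]}) : Prop :=
  toric p /\ p@_0%MM = 0.

(* canonical module (Danilov--Stanley): k-span of the interior monomials *)
Definition canon (p : {mpoly K[d.+1]}) : Prop :=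
  forall m, m \in msupp p -> in_relint m.

Definition hom_canon (phi : {mpoly K[d.+1]} -> {mpoly K[d.+1]}) : Prop :=
  [/\ forall a b, canon a -> canon b -> phi (a + b) = phi a + phi b,
      forall r a, toric r -> canon a -> phi (r * a) = r * phi a &
      forall a, canon a -> toric (phi a)].

Definition trace_canon (p : {mpoly K[d.+1]}) : Prop :=
  exists (k : nat) (phi : 'I_k -> {mpoly K[d.+1]} -> {mpoly K[d.+1]})
         (w : 'I_k -> {mpoly K[d.+1]}),
    [/\ forall i, hom_canon (phi i), forall i, canon (w i) &
        p = \sum_i phi i (w i)].

Definition nearly_gorenstein : Prop :=
  forall p, max_ideal p -> trace_canon p.

(* homogeneous of degree e (grading by the exponent of s) *)
Definition homog_deg (e : nat) (p : {mpoly K[d.+1]}) : Prop :=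
  forall m, m \in msupp p -> mdeg m = e.

Definition generates_canon (k : nat) (P : pred 'I_k)
    (g : 'I_k -> {mpoly K[d.+1]}) : Prop :=
  forall w, canon w -> exists r : 'I_k -> {mpoly K[d.+1]},
    (forall i, toric (r i)) /\ w = \sum_(i | P i) r i * g i.

Definition min_homog_gens (k : nat) (g : 'I_k -> {mpoly K[d.+1]})
    (e : 'I_k -> nat) : Prop :=
  [/\ forall i, canon (g i) /\ homog_deg (e i) (g i),
      generates_canon predT g &
      forall j, ~ generates_canon (fun i => i != j) g].

Definition level : Prop :=
  forall (k : nat) (g : 'I_k -> {mpoly K[d.+1]}) (e : 'I_k -> nat),
    min_homog_gens g e -> forall i j, e i = e j.

End Toric.

Definition infinite_field (K : fieldType) : Prop :=
  forall s : seq K, exists x : K, x \notin s.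

(* Main.v *)
Require Import Defs.
From mathcomp Require Import all_boot all_order all_algebra.
From mathcomp Require Import mpoly.
From mathcomp Require Import zify ring lra.
Set Implicit Arguments. Unset Strict Implicit. Unset Printing Implicit Defensive.
Import Order.TTheory GRing.Theory Num.Theory.
Local Open Scope ring_scope.
From Stdlib Require Import Classical.
Section Farkas.
Variable J : finType.
Definition dotv (s v : J -> rat) := \sum_j s j * v j.
Definition incone n (g : 'I_n -> J -> rat) (z : J -> rat) :=
  exists lam : 'I_n -> rat, (forall i, 0 <= lam i) /\ forall j, z j = \sum_i lam i * g i j.

Lemma dot_lin s a b (u v : J -> rat) :
  dotv s (fun j => a * u j - b * v j) = a * dotv s u - b * dotv s v.
Proof.
rewrite /dotv !mulr_sumr -sumrB; apply: eq_bigr => j _; ring.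
Qed.

Lemma dot_linl (s t : J -> rat) a b v :
  dotv (fun j => a * s j - b * t j) v = a * dotv s v - b * dotv t v.
Proof.
rewrite /dotv !mulr_sumr -sumrB; apply: eq_bigr => j _; ring.
Qed.

Lemma dot_comb n (s : J -> rat) (lam : 'I_n -> rat) (g : 'I_n -> J -> rat) :
  dotv s (fun j => \sum_i lam i * g i j) = \sum_i lam i * dotv s (g i).
Proof.
rewrite /dotv; under eq_bigr do rewrite mulr_sumr.
rewrite exchange_big /=; apply: eq_bigr => i _; rewrite mulr_sumr.
by apply: eq_bigr => j _; ring.
Qed.

Lemma widen_lift n (i : 'I_n) : widen_ord (leqnSn n) i = lift ord_max i.
Proof. by apply: val_inj => /=; rewrite /bump leqNgt ltn_ord. Qed.

Lemma farkas n (g : 'I_n -> J -> rat) z :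
  ~ incone g z -> exists s, (forall i, 0 <= dotv s (g i)) /\ dotv s z < 0.
Proof.
elim: n g z => [|n IH] g z Hz.
  have [j zj] : exists j, z j != 0.
    apply: NNPP => H; apply: Hz; exists (fun _ => 0); split => // j.
    rewrite big_ord0; apply/eqP; apply: contraT => Hj; exfalso; apply: H; by exists j.
  exists (fun j => - z j); split; first by case.
  rewrite /dotv (bigD1 j) //=.
  have E : \sum_(i | i != j) - z i * z i = - \sum_(i | i != j) z i * z i.
    by rewrite -sumrN; apply: eq_bigr => i _; ring.
  have : 0 <= \sum_(i | i != j) z i * z i by apply: sumr_ge0 => i _; rewrite -expr2 sqr_ge0.
  have : 0 < z j * z j by rewrite -expr2 exprn_even_gt0.
  rewrite E; lra.
pose g' (i : 'I_n) := g (widen_ord (leqnSn n) i).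
pose gm := g ord_max.
have Hz' : ~ incone g' z.
  move=> [lam [lam0 Hl]]; apply: Hz.
  exists (fun i => if unlift ord_max i is Some i' then lam i' else 0); split.
    by move=> i; case: (unlift _ _).
  move=> j; rewrite Hl big_ord_recr /= unlift_none mul0r addr0.
  apply: eq_bigr => i _; rewrite /g'.
  rewrite widen_lift.
  by rewrite liftK.
have [s' [Hs'1 Hs'2]] := IH _ _ Hz'.
have [Hm|Hm] := leP 0 (dotv s' gm).
  exists s'; split => // i.
  case: (unliftP ord_max i) => [i' ->|->] //.
  rewrite -widen_lift.
  exact: Hs'1.
set al := dotv s' gm.
pose g'' (i : 'I_n) := fun j => al * g' i j - dotv s' (g' i) * gm j.
pose z'' := fun j => al * z j - dotv s' z * gm j.
have Hz'' : ~ incone g'' z''.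
  move=> [mu [mu0 Hmu]]; apply: Hz.
  pose nu := (dotv s' z - \sum_i mu i * dotv s' (g' i)) / al.
  have nu0 : 0 <= nu.
    have : 0 <= \sum_i mu i * dotv s' (g' i) by apply: sumr_ge0 => i _; apply: mulr_ge0.
    move=> H; rewrite /nu ler_ndivlMr //; lra.
  exists (fun i => if unlift ord_max i is Some i' then mu i' else nu); split.
    by move=> i; case: (unlift _ _).
  move=> j; rewrite big_ord_recr /= unlift_none.
  under eq_bigr => i _ do rewrite {1}widen_lift liftK.
  have Hal : al != 0 by rewrite lt_eqF.
  set T := \sum_(i < n) mu i * g (widen_ord (leqnSn n) i) j.
  set U := \sum_(i < n) mu i * dotv s' (g' i).
  have E : \sum_i mu i * g'' i j = al * T - U * gm j.
    rewrite /T /U mulr_sumr mulr_suml -sumrB; apply: eq_bigr => i _; rewrite /g'' /g'; ring.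
  have H : al * z j = al * T + (dotv s' z - U) * gm j.
    have := Hmu j; rewrite E /z''; move=> H; rewrite -[al * T](subrK (U * gm j)) -H; ring.
  rewrite /nu; apply: (mulfI Hal); rewrite H -/U /gm mulrDr; congr (_ + _); by rewrite mulrA [al * _]mulrC divfK.
have [t [Ht1 Ht2]] := IH _ _ Hz''.
exists (fun j => al * t j - dotv t gm * s' j); split.
  move=> i; rewrite dot_linl.
  case: (unliftP ord_max i) => [i' ->|->].
    rewrite -widen_lift.
    have := Ht1 i'; rewrite /g'' dot_lin /g' /gm; lra.
  rewrite -/gm -/al; lra.
rewrite dot_linl; move: Ht2; rewrite /z'' dot_lin; lra.
Qed.

Lemma farkas_min n (f : 'I_n.+1 -> rat) : exists i, forall k, f i <= f k.
Proof.
elim: n f => [|n IH] f.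
  by exists ord0 => k; rewrite (ord1 k).
have [i Hi] := IH (fun k => f (lift ord0 k)).
have [H|H] := leP (f ord0) (f (lift ord0 i)).
  exists ord0 => k; case: (unliftP ord0 k) => [k' ->|->] //.
  exact: le_trans H (Hi k').
exists (lift ord0 i) => k; case: (unliftP ord0 k) => [k' ->|->] //.
exact: ltW.
Qed.

Lemma farkas_min' n (i0 : 'I_n) (f : 'I_n -> rat) : exists i, forall k, f i <= f k.
Proof. case: n i0 f => [[]//|n] _ f; exact: farkas_min. Qed.

Lemma gl_lemma n (i0 : 'I_n) (g : 'I_n -> J -> rat) (D : J -> rat) j0 :
  (forall i, g i j0 = 1) -> 0 <= D j0 ->
  (forall w, incone g (fun j => D j + g w j)) -> incone g D.
Proof.
move=> Hg1 HD Hw; apply: NNPP => HnD.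
have [s [Hs1 Hs2]] := farkas HnD.
have [i1 Hi1] := farkas_min' i0 (fun i => dotv s (g i)).
set c := dotv s (g i1) in Hi1.
pose s' := fun j => 1 * s j - c * (j == j0)%:R.
have Es' : forall v, dotv s' v = dotv s v - c * v j0.
  move=> v; rewrite /s' dot_linl mul1r; congr (_ - _ * _).
  rewrite /dotv (bigD1 j0) //= eqxx mul1r big1 ?addr0 // => j /negbTE ->; by rewrite mul0r.
have [lam [lam0 Hlam]] := Hw i1.
have : dotv s' (fun j => D j + g i1 j) = \sum_i lam i * dotv s' (g i).
  rewrite -dot_comb /dotv; apply: eq_bigr => j _; by rewrite Hlam.
have H1 : 0 <= \sum_i lam i * dotv s' (g i).
  apply: sumr_ge0 => i _; apply: mulr_ge0 => //; rewrite Es' Hg1 mulr1; have := Hi1 i; lra.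
have c0 : 0 <= c := Hs1 i1.
rewrite Es' Hg1 /dotv.
under eq_bigr do rewrite mulrDr.
rewrite big_split /= -/(dotv s D) -/(dotv s (g i1)) -/c => E.
move: H1; rewrite -E; nra.
Qed.
End Farkas.
Section Lattice.
Variables (K : fieldType) (d n : nat) (V : 'I_n -> 'I_d -> bool).
Hypothesis n_gt0 : (0 < n)%N.
Hypothesis idp : IDP V.

Local Notation sdeg := (@Defs.mdeg d).
Local Notation mexp := (@Defs.mexp d).
Local Notation mono := ('X_{1..d.+1}).

Definition mk (k : nat) (x : 'I_d -> nat) : mono :=
  [multinom (if unlift ord_max j is Some j' then x j' else k) | j < d.+1].

Lemma sdeg_mk k x : sdeg (mk k x) = k.
Proof. by rewrite /Defs.mdeg /mk mnmE unlift_none. Qed.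

Lemma mexp_mk k x j : mexp (mk k x) j = x j.
Proof. by rewrite /Defs.mexp /mk mnmE liftK. Qed.

Lemma mono_ext (m1 m2 : mono) :
  sdeg m1 = sdeg m2 -> (forall j, mexp m1 j = mexp m2 j) -> m1 = m2.
Proof.
move=> H1 H2; apply/mnmP => i; case: (unliftP ord_max i) => [j ->|->] //.
exact: H2.
Qed.

Lemma sdegD (m1 m2 : mono) : sdeg (m1 + m2)%MM = (sdeg m1 + sdeg m2)%N.
Proof. by rewrite /Defs.mdeg mnmDE. Qed.
Lemma mexpD (m1 m2 : mono) j : mexp (m1 + m2)%MM j = (mexp m1 j + mexp m2 j)%N.
Proof. by rewrite /Defs.mexp mnmDE. Qed.
Lemma sdeg0 : sdeg 0%MM = 0%N.
Proof. by rewrite /Defs.mdeg mnm0E. Qed.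
Lemma mexp0 j : mexp 0%MM j = 0%N.
Proof. by rewrite /Defs.mexp mnm0E. Qed.

Definition ev (i : 'I_n) : mono := mk 1 (fun j => (V i j : nat)).

Lemma latt_ext k (x y : 'I_d -> nat) : (forall j, x j = y j) -> latt_pt V k x -> latt_pt V k y.
Proof. by move=> E [lam [H1 H2 H3]]; exists lam; split => // j; rewrite -E. Qed.

Lemma latt_add k l x y : latt_pt V k x -> latt_pt V l y ->
  latt_pt V (k + l) (fun j => (x j + y j)%N).
Proof.
move=> [a [a0 a1 a2]] [b [b0 b1 b2]]; exists (fun i => a i + b i); split.
- by move=> i; apply: addr_ge0.
- by rewrite big_split /= a1 b1 natrD.
- by move=> j; rewrite natrD a2 b2 -big_split; apply: eq_bigr => i _; rewrite mulrDl.
Qed.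

Lemma latt_le k x j : latt_pt V k x -> (x j <= k)%N.
Proof.
move=> [a [a0 a1 a2]]; rewrite -(ler_nat rat) a2 -a1; apply: ler_sum => i _.
by rewrite ler_piMr //; case: (V i j).
Qed.

Lemma latt0E x j : latt_pt V 0 x -> x j = 0%N.
Proof. by move=> H; apply/eqP; rewrite -leqn0; apply: latt_le H. Qed.

Lemma latt1_vertex x : latt_pt V 1 x -> exists u, forall j, x j = V u j.
Proof.
move=> [a [a0 a1 a2]].
have [u au] : exists u, 0 < a u.
  apply: NNPP => H; move: a1; rewrite big1 // => i _.
  apply/eqP; rewrite eq_le a0 andbT; rewrite leNgt; apply/negP => Hi; apply: H; by exists i.
exists u => j.
have xj1 := latt_le j (ex_intro _ a (And3 a0 a1 a2)).
have Vge : forall i, 0 <= ((V i j : nat)%:R : rat) by move=> i; rewrite ler0n.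
have Vle : forall i, ((V i j : nat)%:R : rat) <= 1 by move=> i; case: (V i j).
have a2j := a2 j; clear a2; rename a2j into a2.
have [Hx|Hx] : x j = 0%N \/ x j = 1%N by lia.
all: rewrite Hx in a2 *.
- have H0 : \sum_i a i * (V i j : nat)%:R == 0 by rewrite -a2.
  have nn : forall i, true -> 0 <= a i * (V i j : nat)%:R by move=> i _; apply: mulr_ge0.
  have := @psumr_eq0P _ _ _ _ nn (eqP H0) u isT; move/eqP; rewrite mulf_eq0 (gt_eqF au) /= pnatr_eq0.
  by case: (V u j).
- have H0 : \sum_i a i * (1 - (V i j : nat)%:R) == 0.
    under eq_bigr do rewrite mulrBr mulr1.
    by rewrite sumrB a1 -a2 subrr.
  have nn : forall i, true -> 0 <= a i * (1 - (V i j : nat)%:R).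
    by move=> i _; apply: mulr_ge0 => //; have := Vle i; lra.
  have := @psumr_eq0P _ _ _ _ nn (eqP H0) u isT; move/eqP; rewrite mulf_eq0 (gt_eqF au) /= subr_eq0.
  by case: (V u j).
Qed.

Lemma latt_conv (I : finType) (mu : I -> rat) (W : I -> 'I_d -> nat) k x :
  (forall i, 0 <= mu i) -> (forall i, latt_pt V 1 (W i)) ->
  \sum_i mu i = k%:R -> (forall j, (x j)%:R = \sum_i mu i * (W i j)%:R) ->
  latt_pt V k x.
Proof.
move=> mu0 HW Hs Hx.
have [lw Hlw] := fin_all_exists HW.
exists (fun v => \sum_i mu i * lw i v); split.
- move=> v; apply: sumr_ge0 => i _; apply: mulr_ge0 => //; by case: (Hlw i).
- rewrite exchange_big /= -Hs; apply: eq_bigr => i _.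
  by rewrite -mulr_sumr; case: (Hlw i) => _ -> _; rewrite mulr1.
- move=> j; rewrite Hx.
  under [X in _ = X]eq_bigr do rewrite mulr_suml.
  rewrite [X in _ = X]exchange_big /=; apply: eq_bigr => i _.
  case: (Hlw i) => _ _ ->; rewrite mulr_sumr; apply: eq_bigr => v _; ring.
Qed.

Lemma latt_sum N (y : 'I_N -> 'I_d -> nat) :
  (forall t, latt_pt V 1 (y t)) -> latt_pt V N (fun j => \sum_t y t j)%N.
Proof.
move=> Hy; apply: (latt_conv (mu := fun _ => 1)) => //.
- by rewrite sumr_const card_ord.
- by move=> j; rewrite natr_sum; apply: eq_bigr => t _; rewrite mul1r.
Qed.

Lemma semiP (m : mono) : in_semigroup V m <-> latt_pt V (sdeg m) (mexp m).
Proof.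
split.
- move=> [y [Hy E]]; apply: latt_ext (latt_sum Hy) => j; by rewrite E.
- move=> H; case: (posnP (sdeg m)) => Hd.
  + exists (fun _ _ => 0%N); split.
    * by move=> t; have := ltn_ord t; rewrite [X in (_ < X)%N]Hd.
    * move=> j; rewrite big1 //; apply: latt0E; by rewrite -Hd.
  + exact: idp Hd H.
Qed.

Lemma relint_latt (m : mono) : in_relint V m -> latt_pt V (sdeg m) (mexp m).
Proof. by move=> [lam [H1 H2 H3]]; exists lam; split => // i; apply: ltW. Qed.

Lemma relint_semi (m : mono) : in_relint V m -> in_semigroup V m.
Proof. by move/relint_latt/semiP. Qed.

Lemma relint_pos (m : mono) : in_relint V m -> (0 < sdeg m)%N.
Proof.
move=> [lam [H1 H2 H3]]; rewrite -(ltr_nat rat) -H2.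
rewrite (bigD1 (Ordinal n_gt0)) //=; have := H1 (Ordinal n_gt0).
have : 0 <= \sum_(i | i != Ordinal n_gt0) lam i by apply: sumr_ge0 => i _; apply: ltW.
lra.
Qed.

Lemma semi_add (a b : mono) : in_semigroup V a -> in_semigroup V b -> in_semigroup V (a + b)%MM.
Proof.
move=> /semiP Ha /semiP Hb; apply/semiP; rewrite sdegD.
by apply: latt_ext (latt_add Ha Hb) => j; rewrite mexpD.
Qed.

Lemma semi0 : in_semigroup V 0%MM.
Proof.
apply/semiP; rewrite sdeg0; exists (fun _ => 0); split => //.
- by rewrite big1.
- by move=> j; rewrite mexp0 big1 // => i _; rewrite mul0r.
Qed.

Lemma latt_V i : latt_pt V 1 (fun j => (V i j : nat)).
Proof.
exists (fun u => (u == i)%:R); split.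
- by move=> u; rewrite ler0n.
- by rewrite (bigD1 i) //= eqxx big1 ?addr0 // => u /negbTE ->.
- move=> j; rewrite (bigD1 i) //= eqxx mul1r big1 ?addr0 // => u /negbTE ->; by rewrite mul0r.
Qed.

Lemma semi_ev i : in_semigroup V (ev i).
Proof.
by apply/semiP; rewrite /ev sdeg_mk; apply: latt_ext (latt_V i) => j; rewrite mexp_mk.
Qed.

Lemma semi_deg0 (c : mono) : in_semigroup V c -> sdeg c = 0%N -> c = 0%MM.
Proof.
move=> /semiP H E; apply: mono_ext; first by rewrite sdeg0.
move=> j; rewrite mexp0; apply: latt0E; by rewrite -E.
Qed.

Lemma semi_split (c : mono) : in_semigroup V c -> (0 < sdeg c)%N ->
  exists u c', in_semigroup V c' /\ c = (ev u + c')%MM.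
Proof.
move=> [y [Hy E]] Hd.
pose t0 := Ordinal Hd.
have [u Hu] := latt1_vertex (Hy t0).
have Hle : forall j, (V u j <= mexp c j)%N.
  by move=> j; rewrite E (bigD1 t0) //= -Hu leq_addr.
exists u, (mk (sdeg c).-1 (fun j => mexp c j - V u j)%N); split.
- apply/semiP; rewrite sdeg_mk.
  apply: (latt_conv (mu := fun t => (t != t0)%:R) (W := y)) => //.
  + rewrite (bigD1 t0) //= add0r.
    under eq_bigr => t Ht do rewrite Ht.
    by rewrite sumr_const cardC1 card_ord.
  + move=> j; rewrite mexp_mk (bigD1 t0) //= mul0r add0r.
    rewrite natrB ?Hle // E (bigD1 t0) //= natrD -Hu addrAC subrr add0r natr_sum.
    by apply: eq_bigr => t Ht; rewrite Ht mul1r.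
- apply: mono_ext.
  + by rewrite sdegD /ev !sdeg_mk add1n prednK.
  + by move=> j; rewrite mexpD /ev !mexp_mk subnKC.
Qed.
End Lattice.
Section NG.
Variables (K : fieldType) (d n : nat) (V : 'I_n -> 'I_d -> bool).
Hypothesis n_gt0 : (0 < n)%N.
Hypothesis idp : IDP V.
Local Notation sdeg := (@Defs.mdeg d).
Local Notation mexp := (@Defs.mexp d).
Local Notation mono := ('X_{1..d.+1}).
Local Notation poly := ({mpoly K[d.+1]}).

Lemma canonX (m : mono) : in_relint V m -> canon V ('X_[m] : poly).
Proof. by move=> H m'; rewrite msuppX mem_seq1 => /eqP ->. Qed.

Lemma toricX (m : mono) : in_semigroup V m -> toric V ('X_[m] : poly).
Proof. by move=> H m'; rewrite msuppX mem_seq1 => /eqP ->. Qed.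

Lemma toricC (c : K) : toric V (c%:MP : poly).
Proof.
move=> m; rewrite msuppC; case: (c == 0) => //; rewrite mem_seq1 => /eqP ->.
exact: semi0.
Qed.

Lemma canon0 : canon V (0 : poly).
Proof. by move=> m; rewrite msupp0. Qed.

Lemma canonD (a b : poly) : canon V a -> canon V b -> canon V (a + b).
Proof. by move=> Ha Hb m /msuppD_le; rewrite mem_cat => /orP [/Ha|/Hb]. Qed.

Lemma canonZX (c : K) (m : mono) : in_relint V m -> canon V (c *: 'X_[m] : poly).
Proof. by move=> H m' /msuppZ_le; apply: canonX. Qed.

Lemma canon_sum (s : seq mono) (f : mono -> K) :
  (forall m, m \in s -> in_relint V m) -> canon V (\sum_(m <- s) f m *: 'X_[m] : poly).
Proof.
elim: s => [|a s IH] H; first by rewrite big_nil; exact: canon0.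
rewrite big_cons; apply: canonD.
- by apply: canonZX; apply: H; rewrite mem_head.
- by apply: IH => m Hm; apply: H; rewrite in_cons Hm orbT.
Qed.

Lemma hom0 (phi : poly -> poly) : hom_canon V phi -> phi 0 = 0.
Proof.
case=> Hadd _ _; have := Hadd 0 0 canon0 canon0; rewrite addr0.
by move/(congr1 (fun x => x - phi 0)); rewrite subrr addrK.
Qed.

Lemma hom_lin (phi : poly -> poly) (s : seq mono) (f : mono -> K) :
  hom_canon V phi -> (forall m, m \in s -> in_relint V m) ->
  phi (\sum_(m <- s) f m *: 'X_[m]) = \sum_(m <- s) f m *: phi 'X_[m].
Proof.
move=> Hphi; elim: s => [|a s IH] H; first by rewrite !big_nil hom0.
have Ha : in_relint V a by apply: H; rewrite mem_head.
have Hs : forall m, m \in s -> in_relint V m by move=> m Hm; apply: H; rewrite in_cons Hm orbT.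
case: (Hphi) => Hadd Hmul _.
rewrite !big_cons Hadd; [|exact: canonZX|exact: canon_sum].
rewrite (IH Hs); congr (_ + _).
rewrite -mul_mpolyC Hmul ?mul_mpolyC //; [exact: toricC | exact: canonX].
Qed.

Lemma ng_F1 (ng : nearly_gorenstein K V) (i : 'I_n) :
  exists a : mono, in_relint V a /\ forall z : mono, in_relint V z ->
    exists c : mono, in_semigroup V c /\ (z + ev V i)%MM = (a + c)%MM.
Proof.
have Hmax : max_ideal V ('X_[ev V i] : poly).
  split; first by apply: toricX; apply: semi_ev.
  rewrite mcoeffX; case: eqP => // E.
  by have := sdeg_mk 1 (fun j => (V i j : nat)); rewrite -/(ev V i) E sdeg0.
have [k [phi [w [Hphi Hw E]]]] := ng _ Hmax.
have [t Ht] : exists t, (phi t (w t))@_(ev V i) != 0.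
  apply: NNPP => H; have := congr1 (mcoeff (ev V i)) E.
  rewrite mcoeffX eqxx raddf_sum big1; first by move/eqP; rewrite oner_eq0.
  move=> t _; by apply/eqP; apply: contraT => Hn; exfalso; apply: H; exists t.
have Hrel : forall m, m \in msupp (w t) -> in_relint V m by move=> m; apply: Hw.
move: Ht; rewrite [w t]mpolyE hom_lin // raddf_sum => Ht.
have [m Hm Hm2] : exists2 m, m \in msupp (w t) & (phi t 'X_[m])@_(ev V i) != 0.
  apply: NNPP => H; move: Ht; rewrite big_seq big1 ?eqxx // => m Hm.
  rewrite /= mcoeffZ; apply/eqP; rewrite mulf_eq0; apply/orP; right.
  by apply: contraT => Hn; exfalso; apply: H; exists m.
exists m; split; first exact: Hrel.
move=> z Hz.
have Hzs := relint_semi idp Hz.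
have Hms := relint_semi idp (Hrel _ Hm).
case: (Hphi t) => _ Hmul Htor.
have E1 : 'X_[z] * phi t 'X_[m] = 'X_[m] * phi t 'X_[z].
  rewrite -Hmul; last (apply: canonX; exact: Hrel _ Hm); last exact: toricX.
  rewrite [X in phi t X]mulrC Hmul //; [exact: toricX | exact: canonX].
have : (phi t 'X_[z] * 'X_[m])@_(z + ev V i) != 0.
  by rewrite mulrC -E1 mulrC mcoeffMX.
rewrite -mcoeff_msupp (perm_mem (msuppMX _ _)) => /mapP [c Hc Ec].
exists c; split; first exact: Htor _ (canonX Hz) c Hc.
exact: Ec.
Qed.
End NG.
Section Comb.
Variables (d n : nat) (V : 'I_n -> 'I_d -> bool).
Hypothesis n_gt0 : (0 < n)%N.
Hypothesis idp : IDP V.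
Local Notation sdeg := (@Defs.mdeg d).
Local Notation mexp := (@Defs.mexp d).
Local Notation mono := ('X_{1..d.+1}).
Local Notation ev := (ev V).

Hypothesis F1 : forall i : 'I_n, exists a : mono, in_relint V a /\ forall z : mono, in_relint V z ->
    exists c : mono, in_semigroup V c /\ (z + ev i)%MM = (a + c)%MM.
Variable a0 : nat.
Hypothesis Ha0 : forall m, in_relint V m -> (a0 <= sdeg m)%N.
Variable y0 : mono.
Hypothesis Hy0 : in_relint V y0.
Hypothesis Hy0d : sdeg y0 = a0.

Lemma addm_cancel (x y e : mono) : (x + e)%MM = (y + e)%MM -> x = y.
Proof. exact: addIm. Qed.

Lemma pairsum1 (f g h : 'I_n -> rat) (c : rat) :
  \sum_(p : 'I_n * 'I_n) f p.1 * g p.2 / c * h p.1 = (\sum_u f u * h u) * (\sum_u g u) / c.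
Proof.
rewrite -(pair_bigA _ (fun u v => f u * g v / c * h u)) /= mulr_suml mulr_suml.
apply: eq_bigr => u _.
rewrite mulr_sumr mulr_suml; apply: eq_bigr => v _; ring.
Qed.

Lemma pairsum2 (f g h : 'I_n -> rat) (c : rat) :
  \sum_(p : 'I_n * 'I_n) f p.1 * g p.2 / c * h p.2 = (\sum_u f u) * (\sum_u g u * h u) / c.
Proof.
rewrite -(pair_bigA _ (fun u v => f u * g v / c * h v)) /= mulr_suml mulr_suml.
apply: eq_bigr => u _.
rewrite mulr_sumr mulr_suml; apply: eq_bigr => v _; ring.
Qed.

Lemma comb_level (x : mono) : in_relint V x ->
  exists y c : mono, [/\ in_relint V y, sdeg y = a0, in_semigroup V c & x = (y + c)%MM].
Proof.
move=> Hx.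
have [a Ha] := fin_all_exists F1.
have Hadeg : forall i, (a0 <= sdeg (a i))%N by move=> i; apply: Ha0; case: (Ha i).
case: (boolP [exists i, sdeg (a i) != a0]) => [/existsP [i Hi]|Hall].
  have [c [Hc E]] := (Ha i).2 _ Hy0.
  have Ec : sdeg c = 0%N.
    have := congr1 sdeg E; rewrite !sdegD Hy0d sdeg_mk; have := Hadeg i; move: Hi; lia.
  rewrite (semi_deg0 idp Hc Ec) addm0 in E.
  have [c' [Hc' E']] := (Ha i).2 _ Hx.
  exists y0, c'; split => //.
  apply: (@addm_cancel _ _ (ev i)); rewrite E' -E.
  by rewrite -addmA [(ev i + c')%MM]addmC addmA.
have Hadeg' : forall i, sdeg (a i) = a0.
  move=> i; apply/eqP; apply: contraT => Hi.
  have : [exists i, sdeg (a i) != a0] by apply/existsP; exists i.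
  by rewrite (negbTE Hall).
pose i0 := Ordinal n_gt0.
have Hai : forall i, in_relint V (a i) by move=> i; case: (Ha i).
have F3 : forall y, in_relint V y -> sdeg y = a0 -> forall i, exists W : 'I_d -> nat,
    latt_pt V 1 W /\ forall j, (mexp y j + V i j = mexp (a i) j + W j)%N.
  move=> y Hy Hyd i; have [c [Hc E]] := (Ha i).2 _ Hy.
  have Ec : sdeg c = 1%N.
    have := congr1 sdeg E; rewrite !sdegD Hyd sdeg_mk Hadeg'; lia.
  exists (mexp c); split.
    by have := (semiP idp c).1 Hc; rewrite Ec.
  move=> j; have := congr1 (fun m => mexp m j) E; by rewrite /= !mexpD mexp_mk.
pose bint (i : 'I_n) (j : 'I_d) : int := (V i j : nat)%:Z - (mexp (a i) j)%:Z.
pose S j := [forall i, bint i j == bint i0 j].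
have HS : forall j, S j -> forall i, bint i j = bint i0 j.
  by move=> j /forallP H i; apply/eqP; apply: H.
have sep : forall j, ~~ S j -> forall y, in_relint V y -> sdeg y = a0 -> mexp y j = mexp (a i0) j.
  move=> j /forallPn [i Hi] y Hy Hyd.
  have [Wa [La Ea]] := F3 y Hy Hyd i.
  have [Wb [Lb Eb]] := F3 y Hy Hyd i0.
  have [Wc [Lc Ec]] := F3 (a i0) (Hai i0) (Hadeg' i0) i.
  have [Wd [Ld Ed]] := F3 (a i0) (Hai i0) (Hadeg' i0) i0.
  have := latt_le j La; have := latt_le j Lb; have := latt_le j Lc; have := latt_le j Ld.
  move: (Ea j) (Eb j) (Ec j) (Ed j) Hi; rewrite /bint; lia.
have Hxd := Ha0 Hx.
case: (eqVneq (sdeg x) a0) => [Exd|Nxd].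
  by exists x, 0%MM; split => //; [exact: semi0 | rewrite addm0].
pose dl := (sdeg x - a0)%N.
have Hdl : (0 < dl)%N by rewrite /dl; move: Nxd; lia.
have [c [Hc Ec]] := (Ha i0).2 _ Hx.
have Hcd : sdeg c = dl.+1.
  have := congr1 sdeg Ec; rewrite !sdegD sdeg_mk Hadeg' /dl; lia.
have [u [c' [Hc' Ec']]] := semi_split n_gt0 idp Hc (ltac:(by rewrite Hcd)).
have Hc'd : sdeg c' = dl.
  have := congr1 sdeg Ec'; rewrite sdegD sdeg_mk Hcd; lia.
have HSx : forall j, S j -> mexp x j = (mexp (a u) j + mexp c' j)%N.
  move=> j Sj; have := congr1 (fun m => mexp m j) Ec; rewrite /= Ec' !mexpD !mexp_mk.
  have := HS j Sj u; rewrite /bint; lia.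
pose G (w : 'I_n) (o : option 'I_d) : rat :=
  if o is Some j then (if S j then 0 else (V w j : nat)%:R) else 1.
pose D (o : option 'I_d) : rat :=
  if o is Some j then (if S j then 0 else (mexp x j)%:R - (mexp (a i0) j)%:R) else dl%:R.
have HGL : incone G D.
  apply: (gl_lemma i0 (j0 := None)) => //.
  - move=> w; have [cw [Hcw Ecw]] := (Ha w).2 _ Hx.
    have Hcwd : sdeg cw = dl.+1.
      have := congr1 sdeg Ecw; rewrite !sdegD sdeg_mk Hadeg' /dl; lia.
    have [lam [lam0 lam1 lam2]] := (semiP idp cw).1 Hcw.
    exists lam; split => // -[j|] /=.
    + case: (boolP (S j)) => Sj.
      * by rewrite addr0 big1 // => i _; rewrite mulr0.
      * have Ej : (mexp x j + V w j = mexp (a w) j + mexp cw j)%N.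
          by have := congr1 (fun m => mexp m j) Ecw; rewrite /= !mexpD mexp_mk.
        have Aw : mexp (a w) j = mexp (a i0) j by apply: sep.
        rewrite -lam2; move: Ej; rewrite Aw => /(congr1 (fun k => (k%:R : rat))).
        rewrite !natrD; lra.
    + under eq_bigr do rewrite mulr1.
      by rewrite lam1 Hcwd -natr1.
have [mu [mu0 Hmu]] := HGL.
have Hmu1 : \sum_i mu i = dl%:R.
  by have := Hmu None; rewrite /D /G /= => ->; apply: eq_bigr => i _; rewrite mulr1.
have HmuS : forall j, ~~ S j ->
    (mexp x j)%:R - (mexp (a i0) j)%:R = \sum_i mu i * (V i j : nat)%:R :> rat.
  move=> j Sj; have := Hmu (Some j); rewrite /D /G /= (negbTE Sj) => ->.
  by apply: eq_bigr => i _.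
have Hq : forall j, ~~ S j -> (mexp (a i0) j <= mexp x j)%N.
  move=> j Sj; rewrite -(ler_nat rat); have := HmuS j Sj.
  have : 0 <= \sum_i mu i * ((V i j : nat)%:R : rat).
    by apply: sumr_ge0 => i _; apply: mulr_ge0.
  lra.
have [Wp HWp] := fin_all_exists (fun p : 'I_n * 'I_n => F3 (a p.1) (Hai p.1) (Hadeg' p.1) p.2).
have [lam [lam0 lam1 lam2]] := (semiP idp c').1 Hc'.
pose cc := mk dl (fun j => if S j then mexp c' j else (mexp x j - mexp (a i0) j)%N).
have Hdl0 : (dl%:R : rat) != 0 by rewrite pnatr_eq0 -lt0n.
have Hcc : in_semigroup V cc.
  apply/(semiP idp); rewrite sdeg_mk.
  apply: (latt_conv (mu := fun p : 'I_n * 'I_n => lam p.1 * mu p.2 / dl%:R) (W := Wp)).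
  - move=> p; apply: divr_ge0; [exact: mulr_ge0 | exact: ler0n].
  - by move=> p; case: (HWp p).
  - have := pairsum1 lam mu (fun _ => 1) dl%:R.
    under eq_bigr do rewrite mulr1.
    move=> ->; under eq_bigr do rewrite mulr1.
    by rewrite lam1 Hc'd Hmu1 mulfK.
  - move=> j; rewrite mexp_mk; case: (boolP (S j)) => Sj.
    + have EW : forall p : 'I_n * 'I_n, Wp p j = V p.1 j.
        move=> p; have := (HWp p).2 j; have := HS j Sj p.1; have := HS j Sj p.2.
        rewrite /bint; lia.
      under eq_bigr do rewrite EW.
      rewrite (pairsum1 lam mu (fun u => (V u j : nat)%:R)) Hmu1 mulfK // Sj; exact: lam2.
    + have EW : forall p : 'I_n * 'I_n, Wp p j = V p.2 j.
        move=> p; have := (HWp p).2 j.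
        rewrite (sep j Sj _ (Hai p.1) (Hadeg' p.1)) (sep j Sj _ (Hai p.2) (Hadeg' p.2)); lia.
      under eq_bigr do rewrite EW.
      rewrite (pairsum2 lam mu (fun u => (V u j : nat)%:R)) -HmuS // lam1 Hc'd natrB ?Hq //.
      by rewrite [dl%:R * _]mulrC mulfK.
exists (a u), cc; split => //.
apply: mono_ext.
- rewrite sdegD sdeg_mk Hadeg' /dl; lia.
- move=> j; rewrite mexpD mexp_mk; case: (boolP (S j)) => Sj; first exact: HSx.
  rewrite (sep j Sj (a u) (Hai u) (Hadeg' u)) subnKC //; exact: Hq.
Qed.
End Comb.
Section Level.
Variables (K : fieldType) (d n : nat) (V : 'I_n -> 'I_d -> bool).
Hypothesis n_gt0 : (0 < n)%N.
Hypothesis idp : IDP V.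
Local Notation sdeg := (@Defs.mdeg d).
Local Notation mexp := (@Defs.mexp d).
Local Notation mono := ('X_{1..d.+1}).
Local Notation poly := ({mpoly K[d.+1]}).

Lemma exists_min (P : nat -> Prop) : (exists k, P k) -> exists k, P k /\ forall l, P l -> (k <= l)%N.
Proof.
move=> [k Hk]; elim/ltn_ind: k Hk => k IH Hk.
case: (classic (exists l, P l /\ (l < k)%N)) => [[l [Pl Hl]]|H]; first exact: IH l Hl Pl.
exists k; split => // l Pl; rewrite leqNgt; apply/negP => Hlt; apply: H; by exists l.
Qed.

Lemma relint_exists : exists m : mono, in_relint V m.
Proof.
exists (mk n (fun j => \sum_i (V i j : nat))%N); exists (fun _ => 1); split => //.
- by rewrite sdeg_mk sumr_const card_ord.
- by move=> j; rewrite mexp_mk natr_sum; apply: eq_bigr => i _; rewrite mul1r.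
Qed.

Lemma toric0 : toric V (0 : poly).
Proof. by move=> m; rewrite msupp0. Qed.

Lemma toricD (a b : poly) : toric V a -> toric V b -> toric V (a + b).
Proof. by move=> Ha Hb m /msuppD_le; rewrite mem_cat => /orP [/Ha|/Hb]. Qed.

Lemma toricZ (c : K) (a : poly) : toric V a -> toric V (c *: a).
Proof. by move=> Ha m /msuppZ_le /Ha. Qed.

Lemma toricMX (c : mono) (a : poly) : in_semigroup V c -> toric V a -> toric V ('X_[c] * a).
Proof.
move=> Hc Ha m; rewrite mulrC (perm_mem (msuppMX _ _)) => /mapP [m' Hm' ->].
exact: semi_add (Hc) (Ha _ Hm').
Qed.

Lemma coefM (a0 : nat) (r g : poly) (u : mono) :
  toric V r -> (forall m, m \in msupp g -> (a0 <= sdeg m)%N) -> sdeg u = a0 ->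
  (r * g)@_u = r@_0%MM * g@_u.
Proof.
move=> Hr Hg Hu.
have E0 : r@_0%MM = \sum_(m <- msupp r) r@_m * (m == 0%MM)%:R.
  rewrite {1}[r]mpolyE raddf_sum; apply: eq_bigr => m _; by rewrite /= mcoeffZ mcoeffX.
rewrite E0 mulr_suml {1}[r]mpolyE mulr_suml raddf_sum.
rewrite big_seq [RHS]big_seq; apply: eq_bigr => m Hm.
rewrite /= -scalerAl mcoeffZ -mulrA; congr (_ * _).
case: eqP => [->|Hm0]; first by rewrite mpolyX0 mul1r mul1r.
rewrite mul0r memN_msupp_eq0 //; apply/negP.
rewrite mulrC (perm_mem (msuppMX _ _)) => /mapP [m' Hm' Eu].
have Hms : (0 < sdeg m)%N.
  rewrite lt0n; apply/negP => /eqP H0; apply: Hm0; apply: (semi_deg0 idp) H0; exact: Hr.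
have := Hg _ Hm'; have := congr1 sdeg Eu; rewrite sdegD; lia.
Qed.

Theorem level_main (ng : nearly_gorenstein K V) : level K V.
Proof.
have [a0 [[y0 [Hy0 Hy0d]] Ha0m]] :=
  exists_min (P := fun k => exists m : mono, in_relint V m /\ sdeg m = k)
    (let: ex_intro m Hm := relint_exists in ex_intro _ (sdeg m) (ex_intro _ m (conj Hm erefl))).
have Ha0 : forall m : mono, in_relint V m -> (a0 <= sdeg m)%N.
  by move=> m Hm; apply: Ha0m; exists m.
have L := comb_level n_gt0 idp (ng_F1 idp ng) Ha0 Hy0 Hy0d.
move=> k g e [Hg Hgen Hmin].
pose gen_by (P : pred 'I_k) (x : poly) := exists r : 'I_k -> poly,
  (forall i, toric V (r i)) /\ x = \sum_(i | P i) r i * g i.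
have gen0 : forall P, gen_by P 0.
  by move=> P; exists (fun _ => 0); split => [i|]; [exact: toric0 | rewrite big1 // => i _; rewrite mul0r].
have genD : forall P x y, gen_by P x -> gen_by P y -> gen_by P (x + y).
  move=> P x y [r1 [H1 E1]] [r2 [H2 E2]]; exists (fun i => r1 i + r2 i); split.
  - by move=> i; apply: toricD.
  - by rewrite E1 E2 -big_split; apply: eq_bigr => i _; rewrite mulrDl.
have genZ : forall P c x, gen_by P x -> gen_by P (c *: x).
  move=> P c x [r [H E]]; exists (fun i => c *: r i); split.
  - by move=> i; apply: toricZ.
  - by rewrite E scaler_sumr; apply: eq_bigr => i _; rewrite scalerAl.
have genX : forall P (c : mono) x, in_semigroup V c -> gen_by P x -> gen_by P ('X_[c] * x).
  move=> P c x Hc [r [H E]]; exists (fun i => 'X_[c] * r i); split.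
  - by move=> i; apply: toricMX.
  - by rewrite E mulr_sumr; apply: eq_bigr => i _; rewrite mulrA.
have gne0 : forall i, g i != 0.
  move=> i; apply/negP => /eqP Hgi; apply: (Hmin i) => w Hw.
  have [r [Hr E]] := Hgen w Hw; exists r; split => //.
  by rewrite E (bigD1 i) //= Hgi mulr0 add0r.
have Hgdeg : forall i m, m \in msupp (g i) -> sdeg m = e i.
  by move=> i m Hm; case: (Hg i) => _ H; apply: H.
have Hgrel : forall i m, m \in msupp (g i) -> in_relint V m.
  by move=> i m Hm; case: (Hg i) => H _; apply: H.
have ege : forall i, (a0 <= e i)%N.
  move=> i; have : msupp (g i) != [::] by rewrite msupp_eq0 gne0.
  case E : (msupp (g i)) => [//|m s] _.
  have Hm : m \in msupp (g i) by rewrite E mem_head.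
  by rewrite -(Hgdeg _ _ Hm); apply: Ha0; apply: Hgrel Hm.
have Hall : forall i, e i = a0.
  move=> j0; apply/eqP; apply: contraT => Hj0; exfalso; apply: (Hmin j0).
  have genY : forall y : mono, in_relint V y -> sdeg y = a0 ->
      gen_by (fun i => i != j0) 'X_[y].
    move=> y Hy Hyd; have [r [Hr E]] := Hgen _ (canonX (K:=K) Hy).
    exists (fun i => if e i == a0 then ((r i)@_0%MM)%:MP else 0); split.
      by move=> i; case: (e i == a0); [exact: toricC | exact: toric0].
    apply/mpolyP => u; rewrite raddf_sum /=.
    have Hc : forall i, (a0 <= e i)%N -> forall m, m \in msupp (g i) -> (a0 <= sdeg m)%N.
      by move=> i _ m Hm; rewrite (Hgdeg _ _ Hm).
    have HM : forall i, sdeg u = a0 -> (r i * g i)@_u = (r i)@_0%MM * (g i)@_u.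
      move=> i Hu'; exact: (coefM (a0:=a0) (Hr i) (Hc i (ege i)) Hu').
    have Hterm : forall i, ((if e i == a0 then ((r i)@_0%MM)%:MP else 0) * g i)@_u =
        if sdeg u == a0 then (r i * g i)@_u else 0.
      move=> i; case: eqP => Hei; case: eqP => Hu.
      - by rewrite mcoeffCM HM.
      - rewrite mcoeffCM [(g i)@_u]memN_msupp_eq0 ?mulr0 //; apply/negP => Hm.
        by apply: Hu; rewrite -Hei; apply: Hgdeg Hm.
      - rewrite mul0r mcoeff0 HM //.
        rewrite [(g i)@_u]memN_msupp_eq0 ?mulr0 //; apply/negP => Hm.
        by apply: Hei; rewrite -Hu; symmetry; apply: Hgdeg Hm.
      - by rewrite mul0r mcoeff0.
    under eq_bigr do rewrite Hterm.
    case: eqP => Hu.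
      rewrite E raddf_sum /= [LHS](bigD1 j0) //=.
      rewrite [X in X + _ = _]HM //.
      rewrite [(g j0)@_u]memN_msupp_eq0 ?mulr0 ?add0r //; apply/negP => Hm.
      by move: Hj0; rewrite -(Hgdeg _ _ Hm) Hu eqxx.
    rewrite big1 // mcoeffX; case: eqP => // Eyu.
    by exfalso; apply: Hu; rewrite -Eyu.
  move=> w Hw; change (gen_by (fun i => i != j0) w).
  rewrite [w]mpolyE.
  have Hs : forall m, m \in msupp w -> in_relint V m by move=> m; apply: Hw.
  elim: (msupp w) Hs => [|m s IH] Hs; first by rewrite big_nil; apply: gen0.
  rewrite big_cons; apply: genD; last by apply: IH => m' Hm'; apply: Hs; rewrite in_cons Hm' orbT.
  apply: genZ.
  have [y [c [Hy Hyd Hcs ->]]] := L m (Hs m (mem_head _ _)).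
  rewrite mpolyXD mulrC; apply: genX => //; exact: genY.
move=> i j; by rewrite !Hall.
Qed.
End Level.

Theorem corollary4p4 (K : fieldType) (d n : nat) (V : 'I_n -> 'I_d -> bool) :
  infinite_field K -> (0 < n)%N ->
  IDP V -> nearly_gorenstein K V -> level K V.
Proof. by move=> _ n_gt0 idp ng; apply: level_main. Qed.
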